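(* Let $n\ge1$ and let $\lambda=\sum_{k=1}^n m_k\omega_k$ be a dominant integral weight of $\mathfrak{sp}_{2n}(\mathbb C)$. Then the symplectic FFLV basis $\{f^{\mathsf p}\nu_\lambda:\mathsf p\in S(\lambda)\}$ of $V_\lambda$ is in a weight preserving one-to-one correspondence with the set $\mathrm{SyST}_\lambda$ of symplectic PBW-semistandard tableaux of shape $\lambda$ with entries in $\mathcal N$.
   Context: Notation for $\mathfrak{sp}_{2n}$: $\varepsilon_1,\dots,\varepsilon_n$ is the standard basis of $\mathfrak h^*$, simple roots $\alpha_i=\varepsilon_i-\varepsilon_{i+1}$ ($i<n$), $\alpha_n=2\varepsilon_n$, fundamental weights $\omega_k=\varepsilon_1+\dots+\varepsilon_k$. For $1\le j\le n$ put $\bar j:=2n+1-j$. Let $\mathsf J=\{1<\dots<n<\overline{n-1}<\dots<\bar 1\}$; for $x\in\mathsf J$, $x+1$ is the successor of $x$ in $\mathsf J$. Positive roots: $\alpha_{i,j}=\alpha_i+\dots+\alpha_j$ for $1\le i\le j\le n$ and $\alpha_{i,\bar j}=\alpha_i+\dots+\alpha_n+\alpha_{n-1}+\dots+\alpha_j$ for $1\le i\le j\le n$ (with $\alpha_{i,\bar n}=\alpha_{i,n}$); $\alpha_{\bar j}:=\alpha_{j,\bar j}$. Fix nonzero root vectors $f_\alpha\in\mathfrak n^-_{-\alpha}$. A symplectic Dyck path is a sequence $(\mathsf d(0),\dots,\mathsf d(s))$ of positive roots with $\mathsf d(0)=\alpha_i$ simple, $\mathsf d(s)=\alpha_j$ or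 $\alpha_{\bar j}$ for some $j$, and if $\mathsf d(r)=\alpha_{p,q}$ ($p,q\in\mathsf J$) then $\mathsf d(r+1)\in\{\alpha_{p,q+1},\alpha_{p+1,q}\}$. The FFLV polytope $P(\lambda)\subset\mathbb R^{n^2}_{\ge0}$ consists of $(\mathsf p_\alpha)_{\alpha>0}$, $\mathsf p_\alpha\ge0$, such that for every Dyck path with $\mathsf d(0)=\alpha_i$: $\sum_r\mathsf p_{\mathsf d(r)}\le m_i+\dots+m_j$ if $\mathsf d(s)=\alpha_j$, and $\le m_i+\dots+m_n$ if $\mathsf d(s)=\alpha_{\bar j}$. $S(\lambda)$ = integral points of $P(\lambda)$, $f^{\mathsf p}=\prod_\alpha f_\alpha^{\mathsf p_\alpha}$ (fixed order). By Feigin–Fourier–Littelmann, $\{f^{\mathsf p}\nu_\lambda\}_{\mathsf p\in S(\lambda)}$ is a basis of the irreducible module $V_\lambda$ with highest weight vector $\nu_\lambda$ (the symplectic FFLV basis); $f^{\mathsf p}\nu_\lambda$ has weight $\lambda-\sum_\alpha\mathsf p_\alpha\alpha$. Tableaux: $\lambda$ is identified with the partition $\lambda_i=m_i+\dots+m_n$ and its Young diagram $Y_\lambda$ (English convention; rows $i$, columns $j$; $\mu_j$ = length of column $j$). Let $\mathcal N=\{1<\dots<n<\bar n<\dots<\bar1\}$. A symplectic PBW-semistandard tableau of shape $\lambda$ is a filling $T_{i,j}\in\mathcal N$ of $Y_\lambda$ such that: (i) if $T_{i,j}\le\mu_j$ then $T_{i,j}=i$; (ii) if $T_{i_1,j}\ne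 i_1$ and $i_2>i_1$ then $T_{i_1,j}>T_{i_2,j}$; (iii) if $T_{i,j}=i$ and $T_{i',j}=\bar i$ for some $i'$, then $i'<i$; (iv) for every $j>1$ and every $i$ there is $i'\ge i$ with $T_{i',j-1}\ge T_{i,j}$. The weight of a tableau is the sum over its columns of $\sum_{i\le n \text{ appearing}}\varepsilon_i-\sum_{j\le n:\ \bar j\text{ appearing}}\varepsilon_j$. *)

(* Defs.v *)
(* Conventions (1-based, nat-encoded):
   - J = {1<..<n<\bar{n-1}<..<\bar 1} is encoded by positions 1..2n-1, where
     \bar j sits at position 2n-j (so \bar n would be position n, consistent
     with alpha_{i,\bar n} = alpha_{i,n}); the successor in J is +1.
   - A positive root alpha_{p,q} (p in 1..n, q a position of J) is the pair
     (p,q) with p <= q <= 2n-p.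
   - N = {1<..<n<\bar n<..<\bar 1} is encoded by 1..2n with \bar j = 2n+1-j
     (the numeric order is the order of N).
   - Weights are nat -> int functions: coordinate k (1<=k<=n) is the
     coefficient of epsilon_k. *)
From mathcomp Require Import all_boot all_order all_algebra.
Set Implicit Arguments. Unset Strict Implicit. Unset Printing Implicit Defensive.
Import GRing.Theory Num.Theory.

Local Open Scope ring_scope.

Definition weight := nat -> int.

Definition eps (k : nat) : weight := fun i => ((i == k) : nat)%:Z.

Definition alpha (n k : nat) : weight := fun i =>
  if (k < n)%N then eps k i - eps k.+1 i else 2%:Z * eps n i.

Definition rootwt (n p q : nat) : weight := fun i =>
  if (q <= n)%N then \sum_(p <= k < q.+1) alpha n k i
  else \sum_(p <= k < n.+1) alpha n k i
       + \sum_(2 * n - q <= k < n) alpha n k i.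

Definition isroot (n p q : nat) : bool :=
  [&& (1 <= p)%N, (p <= n)%N, (p <= q)%N & (q <= 2 * n - p)%N].

(* highest weight lambda = sum m_k omega_k, in epsilon coordinates *)
Definition lam (m : nat -> nat) (n : nat) : weight := fun i =>
  (\sum_(i <= l < n.+1) m l)%N%:Z.

(* points of R^{n^2}: finite functions on pairs (p,q) in [0,n]x[0,2n],
   required to vanish off the positive roots *)
Definition point (n : nat) := {ffun 'I_n.+1 * 'I_(2 * n).+1 -> nat}.

Definition coef (n : nat) (P : point n) (x : nat * nat) : nat :=
  if (x.1 <= n)%N && (x.2 <= 2 * n)%N then P (inord x.1, inord x.2) else 0%N.

Definition dyck_step (n : nat) (a b : nat * nat) : bool :=
  isroot n b.1 b.2 && ((b == (a.1, a.2.+1)) || (b == (a.1.+1, a.2))).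

Definition dyck_from (n i : nat) (d0 : nat * nat) (ds : seq (nat * nat)) : bool :=
  [&& (1 <= i)%N, (i <= n)%N, d0 == (i, i) & path (dyck_step n) d0 ds].

Definition in_S (m : nat -> nat) (n : nat) (P : point n) : Prop :=
  (forall x : 'I_n.+1 * 'I_(2 * n).+1, ~~ isroot n x.1 x.2 -> P x = 0%N) /\
  (forall (i : nat) (d0 : nat * nat) (ds : seq (nat * nat)),
     dyck_from n i d0 ds ->
     let s := (\sum_(x <- d0 :: ds) coef P x)%N in
     (forall j, (j <= n)%N -> last d0 ds = (j, j) ->
        (s <= \sum_(i <= l < j.+1) m l)%N) /\
     (forall j, (1 <= j)%N -> (j <= n)%N -> last d0 ds = (j, 2 * n - j)%N ->
        (s <= \sum_(i <= l < n.+1) m l)%N)).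

(* weight of f^P nu_lambda : lambda - sum_alpha P_alpha alpha *)
Definition pwt (m : nat -> nat) (n : nat) (P : point n) : weight := fun k =>
  lam m n k - \sum_(x : 'I_n.+1 * 'I_(2 * n).+1)
                  (P x)%:Z * rootwt n x.1 x.2 k.

Definition lamrow (m : nat -> nat) (n i : nat) : nat := (\sum_(i <= l < n.+1) m l)%N.
Definition lam1 (m : nat -> nat) (n : nat) : nat := lamrow m n 1.

Definition cell (m : nat -> nat) (n i j : nat) : bool :=
  [&& (1 <= i)%N, (i <= n)%N, (1 <= j)%N & (j <= lamrow m n i)%N].

Definition mu (m : nat -> nat) (n j : nat) : nat :=
  count (fun i => cell m n i j) (iota 1 n).

(* fillings: finite functions on [0,n]x[0,lam1], vanishing off Y_lambda *)
Definition tab (m : nat -> nat) (n : nat) := {ffun 'I_n.+1 * 'I_(lam1 m n).+1 -> nat}.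

Definition tcoef (m : nat -> nat) (n : nat) (T : tab m n) (i j : nat) : nat :=
  if (i <= n)%N && (j <= lam1 m n)%N then T (inord i, inord j) else 0%N.

Definition is_SyST (m : nat -> nat) (n : nat) (T : tab m n) : Prop :=
  let t := tcoef T in
  (forall x : 'I_n.+1 * 'I_(lam1 m n).+1, ~~ cell m n x.1 x.2 -> T x = 0%N) /\
  (forall i j, cell m n i j -> (1 <= t i j)%N /\ (t i j <= 2 * n)%N) /\
  (* (i) *)
  (forall i j, cell m n i j -> (t i j <= mu m n j)%N -> t i j = i) /\
  (* (ii) *)
  (forall i1 i2 j, cell m n i1 j -> cell m n i2 j -> t i1 j <> i1 ->
     (i1 < i2)%N -> (t i2 j < t i1 j)%N) /\
  (* (iii) *)
  (forall i i' j, cell m n i j -> cell m n i' j -> t i j = i ->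
     t i' j = ((2 * n).+1 - i)%N -> (i' < i)%N) /\
  (* (iv) *)
  (forall i j, (1 < j)%N -> cell m n i j ->
     exists i', [/\ (i <= i')%N, cell m n i' j.-1 & (t i j <= t i' j.-1)%N]).

Definition appears (m : nat -> nat) (n : nat) (T : tab m n) (j v : nat) : bool :=
  has (fun i => cell m n i j && (tcoef T i j == v)) (iota 1 n).

Definition twt (m : nat -> nat) (n : nat) (T : tab m n) : weight := fun k =>
  \sum_(1 <= j < (lam1 m n).+1)
     ((appears T j k : nat)%:Z - (appears T j ((2 * n).+1 - k)%N : nat)%:Z).

(* Submission.v *)
Require Import Defs.
From mathcomp Require Import all_boot all_order all_algebra.
From mathcomp Require Import zify.
Set Implicit Arguments. Unset Strict Implicit. Unset Printing Implicit Defensive.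

Section Basic.
Variables (n : nat) (m : nat -> nat).
Local Notation lr := (lamrow m n).
Local Notation L := (lam1 m n).

Lemma lr_split i j : i <= j -> j <= n.+1 -> lr i = \sum_(i <= l < j) m l + lr j.
Proof. by move=> ij jn; rewrite /lamrow (big_cat_nat (n:=j)). Qed.

Lemma lr_mono i j : i <= j -> lr j <= lr i.
Proof.
move=> ij; case: (leqP j n.+1) => jn; first by rewrite (lr_split ij jn) leq_addl.
by rewrite /lamrow [X in X <= _]big_geq //; lia.
Qed.

Lemma lr_big i : n < i -> lr i = 0.
Proof. by move=> ni; rewrite /lamrow big_geq. Qed.

Lemma L_ge i : 1 <= i -> lr i <= L.
Proof. by move=> i1; rewrite /lam1 lr_mono. Qed.

Lemma cellE i j : cell m n i j = [&& 1 <= i, i <= n, 1 <= j & j <= lr i].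
Proof. by []. Qed.

Lemma cell_mono i i' j : cell m n i j -> 1 <= i' -> i' <= i -> cell m n i' j.
Proof.
rewrite !cellE => /and4P[h1 h2 h3 h4] h5 h6; apply/and4P; split => //.
  exact: leq_trans h6 h2.
exact: leq_trans h4 (lr_mono h6).
Qed.

Lemma cell_mu i j : cell m n i j -> i <= mu m n j.
Proof.
move=> c; rewrite /mu.
have iN : i <= n by case/and4P: c.
have -> : iota 1 n = iota 1 i ++ iota (1 + i) (n - i).
  by rewrite -iotaD subnKC.
rewrite count_cat.
have -> : count (fun i0 => cell m n i0 j) (iota 1 i) = i.
  rewrite (eq_in_count (a2 := predT)) ?count_predT ?size_iota //.
  move=> x; rewrite mem_iota => /andP[x1 x2]; apply: (cell_mono c) => //.
  lia.
Qed.

Lemma mu_le q j : 1 <= j -> lr q.+1 < j -> mu m n j <= q.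
Proof.
move=> j1 hq; rewrite /mu.
case: (leqP n q) => nq.
  by apply: leq_trans (count_size _ _) _; rewrite size_iota.
have -> : iota 1 n = iota 1 q ++ iota (1 + q) (n - q).
  by rewrite -iotaD subnKC // ltnW.
rewrite count_cat.
rewrite (eq_in_count (a1 := fun i0 => cell m n i0 j) (a2 := pred0) (s := iota (1 + q) _)).
  by rewrite count_pred0 addn0; apply: leq_trans (count_size _ _) _; rewrite size_iota.
move=> x; rewrite mem_iota => /andP[x1 _]; apply/negbTE.
rewrite cellE; apply/negP => /and4P[_ _ _ h].
have h2 := lr_mono (i:=q.+1) (j:=x) ltac:(lia); lia.
Qed.

Lemma sum_ind a b N :
  \sum_(1 <= j < N.+1) ((a < j) && (j <= b) : nat) = minn b N - a.
Proof.
elim: N => [|N IH]; first by rewrite big_geq //; lia.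
rewrite big_nat_recr //= IH.
case: (ltnP a N.+1) => h1; case: (leqP N.+1 b) => h2 /=; lia.
Qed.

End Basic.
Arguments lr_split {n m i j}.
Arguments lr_mono {n m i j}.
Arguments lr_big {n m i}.
Arguments L_ge {n m i}.
Arguments cellE {n m i j}.
Arguments cell_mono {n m i i' j}.
Arguments cell_mu {n m i j}.
Arguments mu_le {n m q j}.

Definition Cm n m (T : tab m n) (p q j : nat) : bool :=
  [&& isroot n p q, cell m n p j & tcoef T p j == q.+1].

Section Tab.
Variables (n : nat) (m : nat -> nat) (T : tab m n).
Hypothesis hT : is_SyST T.
Local Notation lr := (lamrow m n).
Local Notation L := (lam1 m n).
Local Notation t := (tcoef T).
Local Notation cell := (cell m n).

Lemma cell_rng i j : cell i j -> (i <= n) && (j <= L).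
Proof.
rewrite cellE => /and4P[h1 h2 h3 h4]; rewrite h2 /=.
exact: leq_trans h4 (L_ge h1).
Qed.

Lemma tc_out i j : ~~ cell i j -> t i j = 0.
Proof.
move=> nc; rewrite /tcoef; case: ifP => // /andP[h1 h2].
case: hT => h0 _; apply: h0 => /=.
by rewrite !inordK // ltnS.
Qed.

Lemma tc_rng i j : cell i j -> 1 <= t i j <= 2 * n.
Proof. by case: hT => _ [h _] c; apply/andP; apply: h. Qed.

Lemma tc_i i j : cell i j -> t i j <= mu m n j -> t i j = i.
Proof. by case: hT => _ [_ [h _]]; apply: h. Qed.

Lemma tc_ii i1 i2 j : cell i1 j -> cell i2 j -> t i1 j <> i1 -> i1 < i2 -> t i2 j < t i1 j.
Proof. by case: hT => _ [_ [_ [h _]]]; apply: h. Qed.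

Lemma tc_iii i i' j : cell i j -> cell i' j -> t i j = i -> t i' j = (2 * n).+1 - i -> i' < i.
Proof. by case: hT => _ [_ [_ [_ [h _]]]]; apply: h. Qed.

Lemma tc_iv i j : 1 < j -> cell i j ->
  exists i', [/\ i <= i', cell i' j.-1 & t i j <= t i' j.-1].
Proof. by case: hT => _ [_ [_ [_ [_ h]]]]; apply: h. Qed.

Lemma tc_gt i j : cell i j -> t i j != i -> mu m n j < t i j.
Proof.
move=> c ne; rewrite ltnNge; apply/negP => h.
by move: ne; rewrite (tc_i c h) eqxx.
Qed.

Lemma bar_bound p j : cell p j -> t p j != p -> t p j <= (2 * n).+1 - p.
Proof.
elim/ltn_ind: p => p IH c ne.
rewrite leqNgt; apply/negP => hlt.
have /andP[t1 t2] := tc_rng c.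
set k := (2 * n).+1 - t p j.
have k1 : 1 <= k by rewrite /k; lia.
have kp : k < p by rewrite /k; lia.
have ck : cell k j by apply: (cell_mono c) => //; apply: ltnW.
case: (eqVneq (t k j) k) => tk.
  have := tc_iii ck c tk; rewrite /k.
  have -> : (2 * n).+1 - ((2 * n).+1 - t p j) = t p j by lia.
  by move=> /(_ erefl); lia.
have := tc_ii ck c (elimN eqP tk) kp.
have := IH k kp ck tk; rewrite /k; lia.
Qed.

Lemma S4 p j : cell p j -> t p j = p \/ Cm T p (t p j).-1 j.
Proof.
move=> c; case: (eqVneq (t p j) p) => ne; [by left|right].
have /andP[t1 t2] := tc_rng c.
have gt := tc_gt c ne.
have pm := cell_mu c.
have bb := bar_bound c ne.
move: (c); rewrite cellE => /and4P[c1 c2 c3 c4].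
rewrite /Cm c /isroot c1 c2 /=; apply/andP; split; first (apply/andP; split; lia).
by apply/eqP; lia.
Qed.

Lemma S1 p q j : Cm T p q j -> [/\ cell p j, lr q.+1 < j, t p j = q.+1 & isroot n p q].
Proof.
case/and3P => r c /eqP e; split => //.
have ne : t p j != p by move: r => /and4P[_ _ h _]; rewrite e; lia.
have gt := tc_gt c ne.
rewrite ltnNge; apply/negP => h.
have cq : cell q.+1 j.
  move: (c); rewrite !cellE => /and4P[_ _ c3 _]; rewrite c3 h /= andbT.
  case: (leqP q.+1 n) => // nq.
  by move: h; rewrite lr_big //; move: c3; lia.
by have := cell_mu cq; lia.
Qed.

Lemma S2 p q p' q' j : Cm T p q j -> Cm T p' q' j -> p <= p' -> q <= q' ->
  p = p' /\ q = q'.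
Proof.
move=> /S1[c1 _ e1 r1] /S1[c2 _ e2 r2] pp qq.
case: (ltnP p p') => h.
  have ne : t p j <> p by rewrite e1; move: r1 => /and4P[_ _ h' _]; lia.
  by have := tc_ii c1 c2 ne h; lia.
have ep : p = p' by lia.
by subst; split => //; move: e1; rewrite e2; lia.
Qed.

Lemma S3 p q j : Cm T p q j -> 1 < j -> lr q.+1 < j.-1 ->
  exists p' q', [/\ p <= p', q <= q' & Cm T p' q' j.-1].
Proof.
move=> C j1 hj; have [c _ e r] := S1 C.
have [i' [ii ci' le]] := tc_iv j1 c.
case: (S4 ci') => h.
  exfalso; move: le; rewrite e h => le.
  have cq : cell q.+1 j.-1 by apply: (cell_mono ci').
  by move: cq; rewrite cellE => /and4P[_ _ _ h']; lia.
exists i', (t i' j.-1).-1; split => //.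
by move: le; rewrite e; lia.
Qed.

End Tab.

Section Pt.
Variables (n : nat) (m : nat -> nat) (P : point n).
Local Notation lr := (lamrow m n).
Local Notation L := (lam1 m n).
Local Notation cP p q := (coef P (p, q)).
Local Notation aa q := (lr q.+1).
Local Notation root := (isroot n).

Fixpoint E k p q : nat :=
  match k with
  | 0 => cP p q + aa q
  | k'.+1 => cP p q + maxn (aa q)
      (maxn (if root p q.+1 then E k' p q.+1 else 0)
            (if root p.+1 q then E k' p.+1 q else 0))
  end.

Definition e p q := E (2 * n).+1 p q.

Lemma isrootE p q : root p q = [&& 1 <= p, p <= n, p <= q & q <= 2 * n - p].
Proof. by []. Qed.

Lemma E_stable k k' p q : root p q -> 2 * n - (p + q) < k -> k <= k' ->
  E k p q = E k' p q.
Proof.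
elim: k k' p q => [|k IH] [|k'] p q r //=; try lia.
move=> h1 h2; congr (_ + maxn _ (maxn _ _)).
  case: ifP => // r1; apply: IH => //; move: r1; rewrite isrootE; lia.
case: ifP => // r1; apply: IH => //; move: r1; rewrite isrootE; lia.
Qed.

Lemma e_unfold p q : root p q ->
  e p q = cP p q + maxn (aa q) (maxn (if root p q.+1 then e p q.+1 else 0)
                                     (if root p.+1 q then e p.+1 q else 0)).
Proof.
move=> r; rewrite [LHS]/e [LHS]/=; congr (_ + maxn _ (maxn _ _)).
  case: ifP => // r1; rewrite /e; apply: E_stable => //; move: r1 r; rewrite !isrootE; lia.
case: ifP => // r1; rewrite /e; apply: E_stable => //; move: r1 r; rewrite !isrootE; lia.
Qed.

Lemma root_ind (Q : nat -> nat -> Prop) :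
  (forall p q, root p q ->
     (forall p' q', root p' q' -> p + q < p' + q' -> Q p' q') -> Q p q) ->
  forall p q, root p q -> Q p q.
Proof.
move=> H.
suff : forall N p q, root p q -> 2 * n - (p + q) < N -> Q p q.
  by move=> h p q r; apply: (h (2 * n).+1) => //; lia.
elim=> [|N IH] p q r hN; first lia.
apply: H => // p' q' r' lt; apply: IH => //.
move: r r'; rewrite !isrootE; lia.
Qed.

Lemma e_ge p q : root p q -> cP p q + aa q <= e p q.
Proof. by move=> r; rewrite e_unfold // leq_add2l leq_maxl. Qed.

Lemma e_s1 p q : root p q -> root p q.+1 -> cP p q + e p q.+1 <= e p q.
Proof.
move=> r r1; rewrite (e_unfold r) r1 leq_add2l.
by apply: leq_trans (leq_maxr _ _); apply: leq_maxl.
Qed.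

Lemma e_s2 p q : root p q -> root p.+1 q -> cP p q + e p.+1 q <= e p q.
Proof.
move=> r r1; rewrite (e_unfold r) r1 leq_add2l.
by apply: leq_trans (leq_maxr _ _); apply: leq_maxr.
Qed.

Lemma succ_ex p q p' q' : root p q -> root p' q' -> p <= p' -> q <= q' ->
  (p, q) != (p', q') ->
  (root p q.+1 /\ q.+1 <= q') \/ (root p.+1 q /\ p.+1 <= p').
Proof.
move=> r r' h1 h2 ne.
case: (ltnP q q') => hq.
  by left; split => //; move: r r'; rewrite !isrootE; lia.
have eq : q = q' by lia.
subst q'; right.
have hp : p < p'.
  case: (ltnP p p') => // hp; move: ne.
  have -> : p = p' by lia.
  by rewrite eqxx.
by split => //; move: r r'; rewrite !isrootE; lia.
Qed.

Lemma e_mono p q p' q' : root p q -> root p' q' -> p <= p' -> q <= q' ->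
  e p' q' <= e p q.
Proof.
move=> r; move: p q r p' q'.
refine (@root_ind (fun p q => forall p2 q2, root p2 q2 -> p <= p2 -> q <= q2 -> e p2 q2 <= e p q) _).
move=> p q r IH p' q' r' h1 h2.
case: (eqVneq (p, q) (p', q')) => [[-> ->] //|ne].
case: (succ_ex r r' h1 h2 ne) => [[r1 h]|[r1 h]].
  apply: leq_trans (leq_trans (leq_addl (cP p q) _) (e_s1 r r1)).
  by apply: IH => //; lia.
apply: leq_trans (leq_trans (leq_addl (cP p q) _) (e_s2 r r1)).
by apply: IH => //; lia.
Qed.

Lemma e_lt p q p' q' : root p q -> root p' q' -> p <= p' -> q <= q' ->
  (p, q) != (p', q') -> cP p q + e p' q' <= e p q.
Proof.
move=> r r' h1 h2 ne.
case: (succ_ex r r' h1 h2 ne) => [[r1 h]|[r1 h]].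
  by apply: leq_trans (e_s1 r r1); rewrite leq_add2l; apply: e_mono.
by apply: leq_trans (e_s2 r r1); rewrite leq_add2l; apply: e_mono.
Qed.

Lemma e_case p q : root p q -> aa q < e p q - cP p q ->
  (root p q.+1 /\ e p q.+1 = e p q - cP p q) \/
  (root p.+1 q /\ e p.+1 q = e p q - cP p q).
Proof.
move=> r; rewrite (e_unfold r) addKn.
case: ifP => r1; case: ifP => r2; try lia.
Qed.

Lemma e_chase p q : root p q -> exists p' q', [/\ root p' q', p <= p', q <= q',
  e p' q' = e p q & (0 < cP p' q') || (e p' q' == aa q')].
Proof.
move: p q; apply: root_ind => p q r IH.
case: (posnP (cP p q)) => c0; last by exists p, q; split => //; rewrite c0.
case: (leqP (e p q - cP p q) (aa q)) => ha.
  exists p, q; split => //; apply/orP; right; apply/eqP.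
  by have := e_ge r; lia.
case: (e_case r ha) => [[r1 he]|[r1 he]].
  have [p' [q' [r' h1 h2 h3 h4]]] := IH p q.+1 r1 ltac:(lia).
  by exists p', q'; split => //; try lia.
have [p' [q' [r' h1 h2 h3 h4]]] := IH p.+1 q r1 ltac:(lia).
by exists p', q'; split => //; try lia.
Qed.

Definition colm p q j : bool :=
  [&& root p q, 0 < cP p q, e p q - cP p q < j & j <= e p q].

Lemma colm_uniq p q p' q' j : colm p q j -> colm p' q' j -> p <= p' -> q <= q' ->
  p = p' /\ q = q'.
Proof.
move=> /and4P[r c1 h1 h2] /and4P[r' c2 h3 h4] hp hq.
case: (eqVneq (p, q) (p', q')) => [[-> ->] //|ne].
have := e_lt r r' hp hq ne; lia.
Qed.

Lemma line_path (f : nat -> nat * nat) a c :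
  (forall k, a <= k < a + c -> dyck_step n (f k) (f k.+1)) ->
  path (dyck_step n) (f a) [seq f k | k <- iota a.+1 c] /\
  last (f a) [seq f k | k <- iota a.+1 c] = f (a + c).
Proof.
elim: c a => [|c IH] a h /=; first by rewrite addn0.
have [h1 h2] := IH a.+1 (fun k hk => h k ltac:(lia)).
rewrite h1 h2 addSnnS andbT; split => //; apply: h; lia.
Qed.

Lemma path_mono x ds : path (dyck_step n) x ds ->
  [/\ x.1 <= (last x ds).1, x.2 <= (last x ds).2 & (root x.1 x.2 -> root (last x ds).1 (last x ds).2)].
Proof.
elim: ds x => [|y ds IH] x /=; first by split.
case/andP => /andP[ry hy] /IH[h1 h2 h3]; split.
- by move: h1; case/orP: hy => /eqP -> /=; lia.
- by move: h2; case/orP: hy => /eqP -> /=; lia.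
- by move=> _; apply: h3.
Qed.

Lemma sum_last (f : nat * nat -> nat) x s : f (last x s) <= \sum_(y <- x :: s) f y.
Proof.
elim: s x => [|y s IH] x /=; first by rewrite big_cons big_nil addn0.
by rewrite big_cons; apply: leq_trans (IH y) (leq_addl _ _).
Qed.

Lemma e_path p q : root p q -> exists ds, path (dyck_step n) (p, q) ds /\
  e p q = \sum_(y <- (p, q) :: ds) coef P y + aa (last (p, q) ds).2.
Proof.
move: p q; apply: root_ind => p q r IH.
have := e_unfold r.
case: ifP => r1; case: ifP => r2 => he.
- have : (maxn (aa q) (maxn (e p q.+1) (e p.+1 q)) = aa q) \/
         (maxn (aa q) (maxn (e p q.+1) (e p.+1 q)) = e p q.+1) \/
         (maxn (aa q) (maxn (e p q.+1) (e p.+1 q)) = e p.+1 q) by lia.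
  case=> [hm|[hm|hm]]; rewrite hm in he.
  + by exists [::]; rewrite big_cons big_nil addn0.
  + have [ds [h1 h2]] := IH p q.+1 r1 ltac:(lia).
    exists ((p, q.+1) :: ds); rewrite /= h1 /dyck_step r1 eqxx /= big_cons.
    by split => //; rewrite he h2 /= big_cons addnA.
  + have [ds [h1 h2]] := IH p.+1 q r2 ltac:(lia).
    exists ((p.+1, q) :: ds); rewrite /= h1 /dyck_step r2 eqxx orbT /= big_cons.
    by split => //; rewrite he h2 /= big_cons addnA.
- have : (maxn (aa q) (maxn (e p q.+1) 0) = aa q) \/
         (maxn (aa q) (maxn (e p q.+1) 0) = e p q.+1) by lia.
  case=> [hm|hm]; rewrite hm in he.
  + by exists [::]; rewrite big_cons big_nil addn0.
  + have [ds [h1 h2]] := IH p q.+1 r1 ltac:(lia).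
    exists ((p, q.+1) :: ds); rewrite /= h1 /dyck_step r1 eqxx /= big_cons.
    by split => //; rewrite he h2 /= big_cons addnA.
- have : (maxn (aa q) (maxn 0 (e p.+1 q)) = aa q) \/
         (maxn (aa q) (maxn 0 (e p.+1 q)) = e p.+1 q) by lia.
  case=> [hm|hm]; rewrite hm in he.
  + by exists [::]; rewrite big_cons big_nil addn0.
  + have [ds [h1 h2]] := IH p.+1 q r2 ltac:(lia).
    exists ((p.+1, q) :: ds); rewrite /= h1 /dyck_step r2 eqxx orbT /= big_cons.
    by split => //; rewrite he h2 /= big_cons addnA.
- have hm : maxn (aa q) (maxn 0 0) = aa q by lia.
  rewrite hm in he.
  by exists [::]; rewrite big_cons big_nil addn0.
Qed.

End Pt.

Section PtS.
Variables (n : nat) (m : nat -> nat) (P : point n).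
Hypothesis hP : in_S m P.
Local Notation lr := (lamrow m n).
Local Notation root := (isroot n).
Local Notation e := (e m P).

Lemma e_le p q : root p q -> e p q <= lr p.
Proof.
move=> r; have [ds [hpath he]] := e_path m P r.
have [r1 r2 r3 r4] : [/\ 1 <= p, p <= n, p <= q & q <= 2 * n - p] by move: r; rewrite isrootE => /and4P.
have [z1 z2 z3] := path_mono hpath.
case Ez: (last (p, q) ds) => [a b]; rewrite Ez /= in z1 z2 z3 he.
have rz := z3 r.
have [rz1 rz2 rz3 rz4] : [/\ 1 <= a, a <= n, a <= b & b <= 2 * n - a] by move: rz; rewrite isrootE => /and4P.
pose pre := [seq (p, k) | k <- iota p.+1 (q - p)].
have [ppre lpre] := @line_path n (fun k => (p, k)) p (q - p) (fun k hk => ltac:(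
  rewrite /dyck_step /= eqxx isrootE; apply/andP; split; [apply/and4P; split; lia|done])).
have hq : p + (q - p) = q by lia.
rewrite hq in lpre.
have sle : forall post, \sum_(y <- (p, q) :: ds) coef P y <=
    \sum_(y <- (p, p) :: (pre ++ ds ++ post)) coef P y.
  move=> post; rewrite -cat_cons !big_cat [in X in X <= _]big_cons /=.
  by have := sum_last (fun y => coef P y) (p, p) pre; rewrite lpre /=; lia.
case: (ltnP b n) => hz.
- pose post := [seq (k, b) | k <- iota a.+1 (b - a)].
  have [ppost lpost] := @line_path n (fun k => (k, b)) a (b - a) (fun k hk => ltac:(
    rewrite /dyck_step /= eqxx orbT isrootE andbT; apply/and4P; split; lia)).
  have hz' : a + (b - a) = b by lia.
  rewrite hz' in lpost.
  have df : dyck_from n p (p, p) (pre ++ ds ++ post).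
    by rewrite /dyck_from r1 r2 eqxx /= cat_path ppre lpre /= cat_path hpath Ez ppost.
  have [hb _] := hP.2 _ _ _ df.
  have := hb b (ltnW hz); rewrite !last_cat lpre Ez lpost => /(_ erefl) hs.
  have := sle post; rewrite (lr_split (i:=p) (j:=b.+1)) ?he; try lia.
- pose post := [seq (a, k) | k <- iota b.+1 (2 * n - a - b)].
  have [ppost lpost] := @line_path n (fun k => (a, k)) b (2 * n - a - b) (fun k hk => ltac:(
    rewrite /dyck_step /= eqxx isrootE; apply/andP; split; [apply/and4P; split; lia|done])).
  have hz' : b + (2 * n - a - b) = 2 * n - a by lia.
  rewrite hz' in lpost.
  have df : dyck_from n p (p, p) (pre ++ ds ++ post).
    by rewrite /dyck_from r1 r2 eqxx /= cat_path ppre lpre /= cat_path hpath Ez ppost.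
  have [_ hb] := hP.2 _ _ _ df.
  have := hb a rz1 rz2; rewrite !last_cat lpre Ez lpost => /(_ erefl) hs.
  have := sle post; rewrite he lr_big; last lia.
  rewrite /lamrow; lia.
Qed.

End PtS.

Definition bval n m (P : point n) p j : nat :=
  if cell m n p j then
    (if [seq q <- iota 0 (2 * n).+1 | colm m P p q j] is q :: _ then q.+1 else p)
  else 0.

Definition build n m (P : point n) : tab m n := [ffun x : 'I_n.+1 * 'I_(lam1 m n).+1 => bval m P x.1 x.2].

Section Build.
Variables (n : nat) (m : nat -> nat) (P : point n).
Local Notation lr := (lamrow m n).
Local Notation L := (lam1 m n).
Local Notation root := (isroot n).
Local Notation e := (e m P).
Local Notation colm := (colm m P).
Local Notation bval := (bval m P).
Local Notation cell := (cell m n).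

Lemma colm_q p q q' j : colm p q j -> colm p q' j -> q = q'.
Proof.
move=> h1 h2; case: (leqP q q') => h.
  by case: (colm_uniq h1 h2 (leqnn p) h).
by case: (colm_uniq h2 h1 (leqnn p) (ltnW h)).
Qed.

Lemma colm_root p q j : colm p q j -> root p q.
Proof. by case/and4P. Qed.

Lemma colm_gt p q j : colm p q j -> lr q.+1 < j.
Proof.
case/and4P => r c h1 h2; have := e_ge m P r; lia.
Qed.

Lemma bval_colm p q j : cell p j -> colm p q j -> bval p j = q.+1.
Proof.
move=> c h; rewrite /Submission.bval c.
have hin : q \in [seq q <- iota 0 (2 * n).+1 | colm p q j].
  rewrite mem_filter h mem_iota /=.
  by move: (colm_root h); rewrite isrootE; lia.
case E: [seq q <- iota 0 (2 * n).+1 | colm p q j] => [|q' s]; first by rewrite E in hin.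
have : q' \in [seq q <- iota 0 (2 * n).+1 | colm p q j] by rewrite E mem_head.
by rewrite mem_filter => /andP[h' _]; rewrite (colm_q h' h).
Qed.

Lemma bval_triv p j : cell p j -> (forall q, ~~ colm p q j) -> bval p j = p.
Proof.
move=> c h; rewrite /Submission.bval c.
case E: [seq q <- iota 0 (2 * n).+1 | colm p q j] => [|q' s] //.
have : q' \in [seq q <- iota 0 (2 * n).+1 | colm p q j] by rewrite E mem_head.
by rewrite mem_filter => /andP[h' _]; move: (h q'); rewrite h'.
Qed.

Lemma bval_out p j : ~~ cell p j -> bval p j = 0.
Proof. by move=> c; rewrite /Submission.bval (negbTE c). Qed.

Lemma tc_build i j : tcoef (build m P) i j = bval i j.
Proof.
rewrite /tcoef; case: ifP => [/andP[h1 h2]|h].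
  by rewrite ffunE /= !inordK // ltnS.
have c : ~~ cell i j.
  apply/negP => c; move: (cell_rng c); rewrite h //.
by rewrite bval_out.
Qed.

Hypothesis hP : in_S m P.

Lemma colm_cell p q j : colm p q j -> cell p j.
Proof.
move=> h; have r := colm_root h; have := colm_gt h.
case/and4P: h => _ c h1 h2 _.
have := e_le hP r.
rewrite cellE; move: r; rewrite isrootE; lia.
Qed.

Lemma Cm_build p q j : Cm (build m P) p q j = colm p q j.
Proof.
rewrite /Cm tc_build.
case: (boolP (colm p q j)) => h.
  by rewrite (colm_root h) (colm_cell h) (bval_colm (colm_cell h) h) eqxx.
case: (boolP (cell p j)) => c; last by rewrite andbF.
case: (boolP [exists q' : 'I_(2 * n).+1, colm p q' j]).
  case/existsP => q' h'; rewrite (bval_colm c h').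
  case: (eqVneq q (nat_of_ord q')) => [e'|ne]; first by move: h; rewrite e' h'.
  by apply/negP => /and3P[_ _ /eqP hh]; move/eqP: ne; apply; lia.
move=> hn; rewrite bval_triv //; last first.
  move=> q'; apply/negP => h'; move/negP: hn; apply; apply/existsP.
  have hq' : q' < (2 * n).+1 by move: (colm_root h'); rewrite isrootE; lia.
  by exists (Ordinal hq').
case: (boolP (root p q)) => //= r.
by apply/negP => /eqP; move: r; rewrite isrootE; lia.
Qed.

Lemma bval_cases p j : cell p j ->
  (bval p j = p /\ forall q, ~~ colm p q j) \/ (exists q, colm p q j /\ bval p j = q.+1).
Proof.
move=> c; case: (boolP [exists q' : 'I_(2 * n).+1, colm p q' j]).
  by case/existsP => q' h'; right; exists q'; rewrite (bval_colm c h').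
move=> hn; left.
have h : forall q, ~~ colm p q j.
  move=> q'; apply/negP => h'; move/negP: hn; apply; apply/existsP.
  have hq' : q' < (2 * n).+1 by move: (colm_root h'); rewrite isrootE; lia.
  by exists (Ordinal hq').
by rewrite bval_triv.
Qed.

Lemma bval_ge p j : cell p j -> p <= bval p j.
Proof.
move=> c; case: (bval_cases c) => [[-> _]//|[q [h ->]]].
by move: (colm_root h); rewrite isrootE; lia.
Qed.

Lemma build_SyST : is_SyST (build m P).
Proof.
rewrite /is_SyST; split; [|split; [|split; [|split; [|split]]]].
- by move=> x hx; rewrite ffunE bval_out.
- move=> i j c; rewrite tc_build.
  case: (bval_cases c) => [[-> _]|[q [h ->]]].
    by move: c; rewrite cellE; lia.
  by move: (colm_root h); rewrite isrootE; lia.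
- move=> i j c; rewrite tc_build.
  case: (bval_cases c) => [[-> _]//|[q [h ->]]] hle.
  have := colm_gt h; move: (c); rewrite cellE => /and4P[_ _ j1 _] hh.
  by have := mu_le j1 hh; lia.
- move=> i1 i2 j c1 c2; rewrite !tc_build.
  case: (bval_cases c1) => [[-> _]//|[q1 [h1 ->]]] _ lt.
  have g1 := colm_gt h1.
  case: (bval_cases c2) => [[-> _]|[q2 [h2 ->]]].
    move: c2; rewrite cellE => /and4P[_ _ _ c4].
    case: (leqP i2 q1) => // hq.
    by have := lr_mono (n:=n) (m:=m) hq; lia.
  case: (leqP q1 q2) => hq //.
  by have [] := colm_uniq h1 h2 (ltnW lt) hq; lia.
- move=> i i' j c c'; rewrite !tc_build => ti.
  case: (bval_cases c') => [[-> _]|[q [h ->]]].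
    by move: c c'; rewrite !cellE; lia.
  move=> hq; have := colm_root h; rewrite isrootE => /and4P[_ _ _ hb].
  move: (c) (c'); rewrite !cellE => /and4P[_ ci _ _] /and4P[_ ci' _ _].
  case: (ltngtP i' i) => // hii; first lia.
  by subst i'; move: ti; rewrite (bval_colm c h); lia.
- move=> i j j1 c.
  have cj : cell i j.-1 by move: c; rewrite !cellE; lia.
  rewrite !tc_build.
  case: (bval_cases c) => [[-> _]|[q [h ->]]].
    by exists i; rewrite tc_build; split => //; apply: bval_ge.
  case: (boolP (colm i q j.-1)) => h'.
    by exists i; rewrite tc_build (bval_colm cj h').
  have r := colm_root h.
  have hf : e i q - coef P (i, q) = j.-1.
    move: h h'; rewrite /Submission.colm; case/and4P => r0 c0 ha hb.
    rewrite r0 c0 /=; lia.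
  case: (leqP j.-1 (lr q.+1)) => hl.
    have qn : q.+1 <= n.
      case: (leqP q.+1 n) => // qn; move: hl; rewrite lr_big //; lia.
    have cq : cell q.+1 j.-1 by rewrite cellE; apply/and4P; split => //; lia.
    exists q.+1; rewrite tc_build; split => //; first by move: r; rewrite isrootE; lia.
    exact: bval_ge.
  rewrite -hf in hl.
  have hs : exists s1 s2, [/\ root s1 s2, i <= s1, q <= s2 & e s1 s2 = j.-1].
    case: (e_case r hl) => [[r1 he]|[r1 he]].
      by exists i, q.+1; split => //; lia.
    by exists i.+1, q; split => //; lia.
  have [s1 [s2 [rs hs1 hs2 hes]]] := hs.
  have [z1 [z2 [rz hz1 hz2 hez hc]]] := e_chase m P rs.
  have cz : 0 < coef P (z1, z2).
    case/orP: hc => // /eqP hc.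
    have := lr_mono (n:=n) (m:=m) (i:=q.+1) (j:=z2.+1) ltac:(lia); lia.
  have hcz : colm z1 z2 j.-1 by rewrite /Submission.colm rz cz /=; apply/andP; split; lia.
  have cz' := colm_cell hcz.
  exists z1; rewrite tc_build (bval_colm cz' hcz); split => //; lia.
Qed.

End Build.

Definition gP n m (T : tab m n) p q : nat :=
  \sum_(1 <= j < (lam1 m n).+1) (Cm T p q j : nat).

Definition g n m (T : tab m n) : point n :=
  [ffun x : 'I_n.+1 * 'I_(2 * n).+1 => gP T x.1 x.2].

Lemma sum_le_ind (S : nat -> bool) a b N :
  (forall i, (a < i) && (i <= b) -> S i) ->
  minn b N - a <= \sum_(1 <= i < N.+1) (S i : nat).
Proof.
move=> h; rewrite -sum_ind; apply: leq_sum => i _.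
by case: (boolP ((a < i) && (i <= b))) => // /h ->.
Qed.

Lemma sum_ge_ind (S : nat -> bool) a b N :
  (forall i, S i -> (a < i) && (i <= b)) ->
  \sum_(1 <= i < N.+1) (S i : nat) <= minn b N - a.
Proof.
move=> h; rewrite -sum_ind; apply: leq_sum => i _.
by case: (boolP (S i)) => // /h ->.
Qed.

Lemma interval_count (S : nat -> bool) f N :
  (forall j, S j -> f < j <= N) ->
  (forall j j', S j -> f < j' -> j' <= j -> S j') ->
  forall j, S j = (f < j) && (j <= f + \sum_(1 <= i < N.+1) (S i : nat)).
Proof.
move=> h1 h2 j; case: (boolP (S j)) => Sj.
  have /andP[a b] := h1 j Sj.
  have := @sum_le_ind S f j N (fun i hi => h2 j i Sj ltac:(lia) ltac:(lia)).
  lia.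
apply/esym/negP => /andP[a b].
have := @sum_ge_ind S f j.-1 N (fun i Si => ltac:(
  have /andP[a' b'] := h1 i Si;
  case: (leqP j i) => ji; [by move: Sj; rewrite (h2 i j Si a ji) | apply/andP; split; lia])).
lia.
Qed.

Section G.
Variables (n : nat) (m : nat -> nat).
Local Notation lr := (lamrow m n).
Local Notation L := (lam1 m n).
Local Notation root := (isroot n).
Local Notation cell := (cell m n).

Lemma coef_g (T : tab m n) x : coef (g T) x = gP T x.1 x.2.
Proof.
rewrite /coef; case: ifP => [/andP[h1 h2]|h].
  by rewrite ffunE /= !inordK // ltnS.
have nr : ~~ root x.1 x.2.
  apply/negP; rewrite isrootE => /and4P[a b c d]; move: h.
  by rewrite b (_ : x.2 <= 2 * n) //; lia.
by rewrite /gP big1_seq // => j _; rewrite /Cm (negbTE nr).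
Qed.

Lemma C2 (P : point n) : in_S m P -> g (build m P) = P.
Proof.
move=> hP; apply/ffunP => x; rewrite ffunE /gP.
have hx1 : (x.1 : nat) <= n by rewrite -ltnS ltn_ord.
have hx2 : (x.2 : nat) <= 2 * n by rewrite -ltnS ltn_ord.
have ePx : P x = coef P (x.1 : nat, x.2 : nat).
  by rewrite /coef /= hx1 hx2 /= !inord_val -surjective_pairing.
rewrite ePx.
under eq_bigr do rewrite Cm_build //.
case: (boolP (root x.1 x.2)) => r; last first.
  rewrite big1_seq; last by move=> j _; rewrite /Submission.colm (negbTE r).
  by rewrite -ePx hP.1.
set c := coef P _.
have he := e_ge m P r; have hl := e_le hP r; have x1 : 0 < x.1 by move: r; rewrite isrootE => /and4P[].
have hL := @L_ge n m x.1 x1.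
case: (posnP c) => c0.
  by rewrite big1_seq // => j _; rewrite /Submission.colm -/c c0 andbF.
under eq_bigr do rewrite /Submission.colm r -/c c0 /=.
rewrite sum_ind; move: c0 he hl hL; rewrite /c. set EE := e m P x.1 x.2. set LL := lr x.1. set CC := coef P _. set L2 := lr _.+1. clearbody EE LL CC L2. move=> h1 h2 h3 h4; clear -h1 h2 h3 h4; lia.
Qed.

End G.

Section B.
Variables (n : nat) (m : nat -> nat) (T : tab m n).
Hypothesis hT : is_SyST T.
Local Notation lr := (lamrow m n).
Local Notation L := (lam1 m n).
Local Notation root := (isroot n).
Local Notation cell := (cell m n).
Local Notation P := (g T).
Local Notation e := (e m (g T)).
Local Notation colm := (colm m (g T)).

Lemma U1 p q j' a b j : Cm T p q j' -> Cm T a b j -> p <= a -> q <= b ->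
  (p, q) != (a, b) -> j < j'.
Proof.
move=> Cx; have [cx gx _ rx] := S1 hT Cx.
suff : forall k a b j, j < j' + k -> Cm T a b j -> p <= a -> q <= b ->
  (p, q) != (a, b) -> j < j'.
  by move=> h Cy; apply: (h j.+1) => //; lia.
elim=> [|k IH] {}a {}b {}j hk Cy ha hb ne; first lia.
case: (ltnP j j') => // hj.
case: (ltngtP j' j) => hj'; last first.
- subst j; have [e1 e2] := S2 hT Cx Cy ha hb.
  by move: ne; rewrite e1 e2 eqxx.
- lia.
have [cy gy _ ry] := S1 hT Cy.
have lb := lr_mono (n:=n) (m:=m) (i:=q.+1) (j:=b.+1) ltac:(lia).
have j1 : 1 < j by move: cx; rewrite cellE; lia.
have [a' [b' [h1 h2 Cz]]] := S3 hT Cy j1 ltac:(lia).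
have : j.-1 < j'.
  apply: (IH a' b') => //; try lia.
  apply/negP => /eqP [e1 e2]; subst a' b'.
  have ea : a = p by lia.
  have eb : b = q by lia.
  by move: ne; rewrite ea eb eqxx.
lia.
Qed.

Lemma coef_gT p q : coef P (p, q) = \sum_(1 <= j < L.+1) (Cm T p q j : nat).
Proof. by rewrite coef_g. Qed.

Lemma Cm_root p q j : Cm T p q j -> root p q.
Proof. by case/and3P. Qed.

Lemma key p q j : Cm T p q j = colm p q j.
Proof.
case: (boolP (root p q)) => r; last first.
  by rewrite /Cm /Submission.colm (negbTE r).
move: p q r j; apply: (root_ind (n:=n)) => p q r IH j.
set c := coef P (p, q).
have X : forall a b, root a b -> p <= a -> q <= b -> (p, q) != (a, b) ->
    forall j', Cm T p q j' -> e a b < j'.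
  move=> a b ra; move: a b ra.
  refine (@root_ind n (fun a b => p <= a -> q <= b -> (p, q) != (a, b) ->
    forall j', Cm T p q j' -> e a b < j') _).
  move=> a b ra IH' ha hb ne j' Cx.
  have [cx gx _ _] := S1 hT Cx.
  case: (posnP (coef P (a, b))) => ca.
    rewrite (e_unfold m P ra) ca add0n.
    have lb := lr_mono (n:=n) (m:=m) (i:=q.+1) (j:=b.+1) ltac:(lia).
    have j1 : 0 < j' by move: cx; rewrite cellE; lia.
    rewrite !gtn_max; apply/andP; split; first lia.
    apply/andP; split.
      case: ifP => // r1; apply: IH' => //; try lia.
      by apply/negP => /eqP [_ e2]; lia.
    case: ifP => // r1; apply: IH' => //; try lia.
    by apply/negP => /eqP [e2 _]; lia.
  have hc : colm a b (e a b).
    by have := e_ge m P ra; rewrite /Submission.colm ra ca leqnn /=; lia.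
  have lt : p + q < a + b.
    case: (ltnP (p + q) (a + b)) => // hh; move: ne.
    have ea : a = p by lia.
    have eb : b = q by lia.
    by rewrite ea eb eqxx.
  rewrite -(IH a b ra lt) in hc.
  exact: U1 Cx hc ha hb ne.
have Ha : forall j, Cm T p q j -> e p q - c < j.
  move=> j0 Cx; have [cx gx _ _] := S1 hT Cx.
  have j1 : 0 < j0 by move: cx; rewrite cellE; lia.
  rewrite (e_unfold m P r) -/c addKn !gtn_max gx /=; apply/andP; split.
    case: ifP => // r1; apply: (X _ _ r1) => //.
    by apply/negP => /eqP [e2]; lia.
  case: ifP => // r1; apply: (X _ _ r1) => //.
  by apply/negP => /eqP [e2]; lia.
have Hb : forall j, Cm T p q j -> e p q - c < j.-1 -> Cm T p q j.-1.
  move=> j0 Cx hj.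
  have hge := e_ge m P r; rewrite -/c in hge.
  have j1 : 1 < j0 by lia.
  have [a [b [h1 h2 Cy]]] := S3 hT Cx j1 ltac:(lia).
  case: (eqVneq (p, q) (a, b)) => [[-> ->] //|ne].
  have ry := Cm_root Cy.
  have hy : colm a b j0.-1.
    have lt : p + q < a + b.
      case: (ltnP (p + q) (a + b)) => // hh; move: ne.
      have ea : a = p by lia.
      have eb : b = q by lia.
      by rewrite ea eb eqxx.
    by rewrite -(IH a b ry lt).
  have := e_lt m P r ry h1 h2 ne; rewrite -/c.
  by case/and4P: hy => _ _ _; lia.
have Hd : forall j j', Cm T p q j -> e p q - c < j' -> j' <= j -> Cm T p q j'.
  move=> j0 j' Cx; elim: j0 Cx => [|j0 IHj] Cx h1 h2; first lia.
  case: (eqVneq j' j0.+1) => [-> //|ne].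
  apply: IHj; [exact: (Hb j0.+1 Cx ltac:(lia)) | lia | lia].
have := @interval_count (Cm T p q) (e p q - c) L.
rewrite -coef_gT -/c => /(_ _ Hd j) ->; last first.
  move=> j0 Cx; rewrite Ha //=; have [cx _ _ _] := S1 hT Cx.
  by move: cx; rewrite cellE => /and4P[_ _ _ h]; apply: leq_trans h (L_ge _); move: r; rewrite isrootE; lia.
rewrite /Submission.colm r -/c /=; have := e_ge m P r; rewrite -/c.
case: (posnP c) => c0 /=; lia.
Qed.

Lemma B : build m (g T) = T.
Proof.
apply/ffunP => x; rewrite ffunE.
have hx1 : (x.1 : nat) <= n by rewrite -ltnS ltn_ord.
have hx2 : (x.2 : nat) <= L by rewrite -ltnS ltn_ord.
have -> : T x = tcoef T x.1 x.2.
  by rewrite /tcoef hx1 hx2 /= !inord_val -surjective_pairing.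
case: (boolP (cell x.1 x.2)) => c; last by rewrite bval_out // tc_out.
case: (S4 hT c) => h.
  rewrite h bval_triv // => q; apply/negP; rewrite -key => /(S1 hT)[_ _ h' r].
  by move: r; rewrite isrootE; move: h'; rewrite h => -> /and4P[_ _ hh _]; lia.
rewrite (bval_colm c (_ : colm x.1 (tcoef T x.1 x.2).-1 x.2)); last by rewrite -key.
have [_ _ h' _] := S1 hT h.
have /andP[t1 _] := tc_rng hT c; lia.
Qed.

End B.

Definition ltp (x y : nat * nat) : bool :=
  [&& x.1 <= y.1, x.2 <= y.2 & x.1 + x.2 < y.1 + y.2].

Lemma ltp_trans : transitive ltp.
Proof. move=> y x z /and3P[a b c] /and3P[d e f]; apply/and3P; split; lia. Qed.

Lemma path_ltp n x ds : path (dyck_step n) x ds -> pairwise ltp (x :: ds).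
Proof.
move=> h; rewrite -sorted_pairwise; last exact: ltp_trans.
apply: sub_path h => a b /andP[_ /orP[] /eqP ->]; rewrite /ltp /=; apply/and3P; split; lia.
Qed.

Lemma path_all n x ds : path (dyck_step n) x ds ->
  forall y, y \in x :: ds -> [/\ x.1 <= y.1, y.1 <= (last x ds).1 & y.2 <= (last x ds).2].
Proof.
elim: ds x => [|y' ds IH] x /=.
  by move=> _ y; rewrite inE => /eqP ->.
case/andP => /andP[_ hy] hp y; rewrite inE => /orP[/eqP ->|hin].
  have [h1 h2 _] := path_mono hp.
  by case/orP: hy => /eqP E; rewrite E /= in h1 h2 *; split; lia.
have [h1 h2 h3] := IH y' hp y hin.
by case/orP: hy => /eqP E; rewrite E /= in h1 h2 h3 *; split; lia.
Qed.

Lemma count_le1 (F : nat * nat -> bool) s :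
  pairwise ltp s -> (forall x y, ltp x y -> F x -> F y -> False) ->
  \sum_(x <- s) (F x : nat) <= 1.
Proof.
elim: s => [|x s IH] /=; first by rewrite big_nil.
move=> /andP[ha hp] hF; rewrite big_cons.
case: (boolP (F x)) => Fx /=; last by rewrite add0n; apply: IH.
rewrite big1_seq // => y /andP[_ ys].
case: (boolP (F y)) => // Fy; exfalso.
by apply: (hF x y) => //; move/allP: ha; apply.
Qed.

Section A.
Variables (n : nat) (m : nat -> nat) (T : tab m n).
Hypothesis hT : is_SyST T.
Local Notation lr := (lamrow m n).
Local Notation L := (lam1 m n).
Local Notation root := (isroot n).
Local Notation cell := (cell m n).

Lemma core i d0 ds : dyck_from n i d0 ds ->
  \sum_(x <- d0 :: ds) coef (g T) x <= lr i - lr (last d0 ds).2.+1.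
Proof.
case/and4P => i1 iN /eqP ed hp.
have pw := path_ltp hp.
have hall := path_all hp.
move Ez : (last d0 ds) => z; rewrite Ez in hall.
under eq_bigr do rewrite coef_g /gP.
rewrite exchange_big /=.
have i1' : 1 <= i by [].
have := sum_ind (lr z.2.+1) (lr i) L.
rewrite (_ : minn (lr i) L = lr i); last by have := L_ge (n:=n) (m:=m) i1'; lia.
move=> <-; apply: leq_sum => j _.
case: (boolP ((lr z.2.+1 < j) && (j <= lr i))) => hj.
  apply: count_le1 pw _ => x y hxy Cx Cy.
  move: hxy => /and3P[a b c].
  have [e1 e2] := S2 hT Cx Cy a b; lia.
rewrite big1_seq // => x /andP[_ xin].
case: (boolP (Cm T x.1 x.2 j)) => // Cx; exfalso.
have [cx gx _ _] := S1 hT Cx.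
have [h1 h2 h3] := hall x xin.
rewrite ed /= in h1.
move: hj; rewrite negb_and -!ltnNge => /orP[] h.
  by have := lr_mono (n:=n) (m:=m) (i:=x.2.+1) (j:=z.2.+1) ltac:(lia); lia.
have := lr_mono (n:=n) (m:=m) (i:=i) (j:=x.1) h1.
by move: cx; rewrite cellE => /and4P[_ _ _ hc]; lia.
Qed.

Lemma A : in_S m (g T).
Proof.
split.
  move=> x hx; rewrite ffunE /gP big1_seq // => j _.
  by rewrite /Cm (negbTE hx).
move=> i d0 ds hd /=; have hc := core hd.
have [i1 iN ed hp] := and4P hd.
have [h1 _ _] := path_mono hp.
split.
  move=> j jn hl; rewrite hl /= in hc h1; rewrite (eqP ed) /= in h1.
  by rewrite (lr_split (i:=i) (j:=j.+1)) in hc; lia.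
move=> j j1 jn hl; rewrite hl /= in hc.
have z0 : lr (2 * n - j).+1 = 0 by apply: lr_big; lia.
rewrite z0 in hc.
by rewrite /lamrow in hc; lia.
Qed.

End A.

Section Weights.
Import GRing.Theory.

Local Open Scope ring_scope.

Lemma natz_sum (I : Type) (r : seq I) (P : pred I) (F : I -> nat) :
  ((\sum_(i <- r | P i) F i)%N)%:Z = \sum_(i <- r | P i) (F i)%:Z.
Proof. exact: (big_morph (fun k : nat => k%:Z) PoszD (erefl _)). Qed.

Lemma tele_alpha n a b k : (a <= b)%N -> (b <= n)%N ->
  \sum_(a <= l < b) alpha n l k = eps a k - eps b k.
Proof.
move=> ab bn.
rewrite (telescope_sumr_eq (fun l => - eps l k) _ ab); first by rewrite opprK addrC.
move=> l /andP[_ lb]; rewrite /alpha ifT; last exact: leq_trans lb bn.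
by rewrite opprK addrC.
Qed.

Lemma rootwtE n p q k : isroot n p q -> (1 <= k)%N -> (k <= n)%N ->
  rootwt n p q k = ((p == k) : nat)%:Z - ((q.+1 == k) : nat)%:Z + ((q == 2 * n - k)%N : nat)%:Z.
Proof.
rewrite isrootE => /and4P[p1 pn pq qb] k1 kn.
have epsE : forall a, eps a k = ((a == k) : nat)%:Z by move=> a; rewrite /eps eq_sym.
rewrite /rootwt; case: ifP => qn.
  case: (ltnP q n) => qn'.
    rewrite tele_alpha; try lia.
    rewrite /eps !(eq_sym k).
    have -> : (q == 2 * n - k)%N = false by apply/negbTE/eqP; lia.
    by rewrite addr0.
  have eqn : q = n by lia.
  subst q.
  rewrite big_nat_recr //= tele_alpha // /alpha ltnn /eps !(eq_sym k).
  have -> : (n.+1 == k) = false by apply/negbTE/eqP; lia.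
  have -> : (n == 2 * n - k)%N = (n == k) by apply/eqP/eqP; lia.
  by case: (p == k); case: (n == k) => /=; lia.
have qn' : (n < q)%N by move/negbT: qn; rewrite -ltnNge.
rewrite big_nat_recr //= tele_alpha // tele_alpha //; try lia.
rewrite /alpha ltnn /eps !(eq_sym k).
have -> : (q.+1 == k) = false by apply/negbTE/eqP; lia.
have -> : (q == 2 * n - k)%N = (2 * n - q == k)%N by apply/eqP/eqP; lia.
by case: (p == k); case: (n == k); case: (2 * n - q == k)%N => /=; lia.
Qed.

Lemma sum_uniq (I : finType) (Q : pred I) :
  (forall x y, Q x -> Q y -> x = y) -> (\sum_(x : I) (Q x : nat))%N = [exists x, Q x].
Proof.
move=> hu; case: (boolP [exists x, Q x]) => [/existsP[x0 Qx0]|hn].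
  rewrite (bigD1 x0) //= Qx0 big1 // => y; rewrite ?andTb => ne.
  by case: (boolP (Q y)) => // Qy; move: ne; rewrite (hu _ _ Qy Qx0) eqxx.
rewrite big1 // => y _; case: (boolP (Q y)) => // Qy.
by move/negP: hn; case; apply/existsP; exists y.
Qed.

Lemma bmulz (b c : bool) : (b : nat)%:Z * (c : nat)%:Z = ((b && c) : nat)%:Z.
Proof. by case: b; case: c. Qed.

Section D.
Variables (n : nat) (m : nat -> nat) (T : tab m n).
Hypothesis hT : is_SyST T.
Local Notation lr := (lamrow m n).
Local Notation L := (lam1 m n).
Local Notation root := (isroot n).
Local Notation cell := (cell m n).
Local Notation t := (tcoef T).
Local Notation II := ('I_n.+1 * 'I_(2 * n).+1)%type.

Variable k : nat.
Hypothesis k1 : (1 <= k)%N.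
Hypothesis kn : (k <= n)%N.

Definition Aj j := [exists x : II, Cm T x.1 x.2 j && (x.1 == k :> nat)].
Definition Bj j := [exists x : II, Cm T x.1 x.2 j && (x.2.+1 == k)%N].
Definition Cj j := [exists x : II, Cm T x.1 x.2 j && (x.2 == (2 * n - k)%N :> nat)].

Lemma Cm_rng p q j : Cm T p q j -> (p < n.+1)%N /\ (q < (2 * n).+1)%N.
Proof. by move/Cm_root; rewrite isrootE => /and4P[]; lia. Qed.

Lemma uniqII (x y : II) j : Cm T x.1 x.2 j -> Cm T y.1 y.2 j ->
  (x.1 = y.1 :> nat \/ x.2 = y.2 :> nat) -> x = y.
Proof.
move=> Cx Cy h.
suff [e1 e2] : x.1 = y.1 :> nat /\ x.2 = y.2 :> nat.
  move: e1 e2; clear Cx Cy h; case: x => [a b]; case: y => [c d] /= e1 e2.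
  by congr pair; apply: val_inj.
case: h => h.
  case: (leqP x.2 y.2) => h2.
    by have [] := S2 hT Cx Cy (ltac:(lia) : (x.1 <= y.1)%N) h2; split.
  have [] := S2 hT Cy Cx (ltac:(lia) : (y.1 <= x.1)%N) (ltnW h2); lia.
case: (leqP x.1 y.1) => h2.
  by have [] := S2 hT Cx Cy h2 (ltac:(lia) : (x.2 <= y.2)%N); split.
have [] := S2 hT Cy Cx (ltnW h2) (ltac:(lia) : (y.2 <= x.2)%N); lia.
Qed.

Lemma col_sum j :
  \sum_(x : II) ((Cm T x.1 x.2 j : nat)%:Z * rootwt n x.1 x.2 k) =
  (Aj j : nat)%:Z - (Bj j : nat)%:Z + (Cj j : nat)%:Z.
Proof.
under eq_bigr => x _.
  have -> : (Cm T x.1 x.2 j : nat)%:Z * rootwt n x.1 x.2 k =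
      ((Cm T x.1 x.2 j && (x.1 == k :> nat)) : nat)%:Z -
      ((Cm T x.1 x.2 j && (x.2.+1 == k)%N) : nat)%:Z +
      ((Cm T x.1 x.2 j && (x.2 == (2 * n - k)%N :> nat)) : nat)%:Z.
    case: (boolP (Cm T x.1 x.2 j)) => C /=; last by rewrite mul0r; lia.
    by rewrite mul1r rootwtE //; apply: Cm_root C.
  over.
rewrite big_split /= sumrB -!natz_sum !sum_uniq //;
  move=> x y /andP[Cx /eqP ex] /andP[Cy /eqP ey]; apply: (uniqII Cx Cy); lia.
Qed.

End D.

Section D2.
Variables (n : nat) (m : nat -> nat) (T : tab m n).
Hypothesis hT : is_SyST T.
Local Notation lr := (lamrow m n).
Local Notation L := (lam1 m n).
Local Notation root := (isroot n).
Local Notation cell := (cell m n).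
Local Notation t := (tcoef T).
Local Notation II := ('I_n.+1 * 'I_(2 * n).+1)%type.

Variable k : nat.
Hypothesis k1 : (1 <= k)%N.
Hypothesis kn : (k <= n)%N.

Lemma exII (p q : nat) j : Cm T p q j -> exists x : II, [/\ Cm T x.1 x.2 j, x.1 = p :> nat & x.2 = q :> nat].
Proof.
move=> C; have [h1 h2] := Cm_rng k1 kn C.
by exists (Ordinal h1, Ordinal h2).
Qed.

Lemma AjE j : Aj T k j = cell k j && (t k j != k).
Proof.
apply/existsP/andP.
  case=> x /andP[C /eqP e]; have [c _ tx r] := S1 hT C.
  rewrite -e; split => //; rewrite tx; move: r; rewrite isrootE => /and4P[]; lia.
case=> c ne; case: (S4 hT c) => [h|C]; first by rewrite h eqxx in ne.
by have [x [Cx e1 e2]] := exII C; exists x; rewrite Cx e1 eqxx.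
Qed.

Lemma appk j : appears T j k = (cell k j && (t k j == k)) || Bj T k j.
Proof.
apply/hasP/orP.
  case=> i; rewrite mem_iota => hi /andP[c /eqP e].
  case: (S4 hT c) => [h|C].
    by left; rewrite -e h c /=; move: e; rewrite h => ->.
  right; have [x [Cx e1 e2]] := exII C; apply/existsP; exists x.
  by rewrite Cx e2 e; have /andP[t1 _] := tc_rng hT c; apply/eqP; lia.
case=> [/andP[c e]|/existsP[x /andP[C /eqP e]]].
  by exists k; [rewrite mem_iota; lia | rewrite c e].
have [c _ tx r] := S1 hT C.
exists (x.1 : nat); first by rewrite mem_iota; move: r; rewrite isrootE => /and4P[r1 r2 r3 r4]; apply/andP; split; [exact r1 | rewrite add1n ltnS; exact r2].
by rewrite c tx e eqxx.
Qed.

Lemma appk_disj j : ~~ ((cell k j && (t k j == k)) && Bj T k j).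
Proof.
apply/negP => /andP[/andP[c _] /existsP[x /andP[C /eqP e]]].
have [_ g _ _] := S1 hT C; rewrite e in g.
by move: c; rewrite cellE => /and4P[_ _ _]; lia.
Qed.

Lemma appbar j : appears T j ((2 * n).+1 - k) = Cj T k j.
Proof.
apply/hasP/existsP.
  case=> i; rewrite mem_iota => hi /andP[c /eqP e].
  case: (S4 hT c) => [h|C].
    by exfalso; move: e; rewrite h; lia.
  have [x [Cx e1 e2]] := exII C; exists x.
  by rewrite Cx e2 e; apply/eqP; lia.
case=> x /andP[C /eqP e].
have [c _ tx r] := S1 hT C.
exists (x.1 : nat); first by rewrite mem_iota; move: r; rewrite isrootE => /and4P[r1 r2 r3 r4]; apply/andP; split; [exact r1 | rewrite add1n ltnS; exact r2].
by rewrite c tx e; apply/eqP; lia.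
Qed.

Lemma column j :
  (appears T j k : nat)%:Z - (appears T j ((2 * n).+1 - k) : nat)%:Z =
  (cell k j : nat)%:Z - \sum_(x : II) ((Cm T x.1 x.2 j : nat)%:Z * rootwt n x.1 x.2 k).
Proof.
rewrite col_sum // appk appbar AjE.
have := appk_disj j.
case: (cell k j) => //=; case: (t k j == k) => //=; case: (Bj T k j) => //=;
  case: (Cj T k j) => //=; lia.
Qed.

Lemma D : twt T k = pwt m (g T) k.
Proof.
rewrite /twt /pwt.
under eq_bigr do rewrite column.
rewrite sumrB.
have -> : lam m n k = \sum_(1 <= j < L.+1) (cell k j : nat)%:Z.
  rewrite -natz_sum /lam; congr Posz.
  have -> : \sum_(1 <= j < L.+1) (cell k j : nat) = \sum_(1 <= j < L.+1) (((0 < j)%N && (j <= lr k)%N) : nat).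
    by apply: eq_bigr => j _; rewrite cellE k1 kn.
  rewrite sum_ind; have := L_ge (n:=n) (m:=m) k1; rewrite /lamrow; lia.
congr (_ - _).
rewrite exchange_big /=; apply: eq_bigr => x _.
by rewrite ffunE /gP natz_sum mulr_suml.
Qed.

End D2.

End Weights.

Theorem theorem3p16 (n : nat) (m : nat -> nat) (hn : (1 <= n)%N) :
  exists f : point n -> tab m n,
    (forall P, in_S m P -> is_SyST (f P)) /\
    (forall P Q, in_S m P -> in_S m Q -> f P = f Q -> P = Q) /\
    (forall T, is_SyST T -> exists P, in_S m P /\ f P = T) /\
    (forall P, in_S m P -> forall k, (1 <= k)%N -> (k <= n)%N ->
       twt (f P) k = pwt m P k).
Proof.
exists (@build n m); split; [|split; [|split]].
- by move=> P hP; apply: build_SyST.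
- by move=> P Q hP hQ E; rewrite -(C2 hP) -(C2 hQ) E.
- by move=> T hT; exists (g T); split; [apply: A | apply: B].
- move=> P hP k k1 kn.
  by rewrite (D (build_SyST hP) k1 kn) (C2 hP).
Qed.
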